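(* For all real $x$ and $n\ge 1/2$ the following holds: \begin{equation*} -\sqrt{x^2/4+n+1/2}<\frac{U^{\prime} (n,x)}{U(n,x)}<-\sqrt{x^2 /4+n-1/2} . \end{equation*} The left inequality also holds for $n>-1/2$.
   Context: $U(a,x)$ denotes the standard parabolic cylinder function (as in the NIST Digital Library of Mathematical Functions, Chapter 12), i.e. the solution of $y''(x)-(x^2/4+a)y(x)=0$ that is recessive (decays) as $x\rightarrow+\infty$; $U'(a,x)$ is its derivative with respect to $x$. The parameter $n$ is real. *)

(* Defs.v *)
From Stdlib Require Import Reals.
From Coquelicot Require Import Coquelicot.
Open Scope R_scope.

(* [is_PCF_U a y dy] : y is a (nonzero) recessive solution of the Weber
   equation y''(x) = (x^2/4 + a) y(x) on all of R, with derivative dy.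
   The recessive solution is unique up to a nonzero constant factor, so y is
   a nonzero multiple c * U(a,.) of the standard parabolic cylinder function
   (DLMF 12), and dy = c * U'(a,.).  The ratio dy/y = U'(a,.)/U(a,.) is
   independent of the constant c. *)
Definition is_PCF_U (a : R) (y dy : R -> R) : Prop :=
  (forall x, is_derive y x (dy x)) /\
  (forall x, is_derive dy x ((x ^ 2 / 4 + a) * y x)) /\
  is_lim y p_infty 0 /\
  (exists x0, y x0 <> 0).

(* Main.v *)
Require Import Defs.
From Stdlib Require Import Reals Lra Psatz.
From Coquelicot Require Import Coquelicot.
Open Scope R_scope.

Ltac exd Hy Hdy :=
  let Fy := lazymatch type of Hy with forall t, is_derive ?F _ _ => F end in
  let Fd := lazymatch type of Hdy with forall t, is_derive ?F _ _ => F end in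
  repeat match goal with
  | |- _ /\ _ => split
  | |- True => exact I
  | |- ex_derive (fun _ => ?g _) ?x => 
      first [ constr_eq g Fy; exact (ex_intro _ _ (Hy x)) | constr_eq g Fd; exact (ex_intro _ _ (Hdy x)) ]
  end.
Ltac rwd Hy Hdy := repeat (rewrite (is_derive_unique _ _ _ (Hy _))); repeat (rewrite (is_derive_unique _ _ _ (Hdy _))).
Ltac dtac Hy Hdy := auto_derive; [ exd Hy Hdy | rwd Hy Hdy ].

Lemma mono_le (f df : R -> R) (a b : R) : a <= b ->
  (forall x, a <= x <= b -> is_derive f x (df x)) ->
  (forall x, a <= x <= b -> 0 <= df x) -> f a <= f b.
Proof.
  intros Hab Hd Hp.
  destruct (Req_dec a b) as [->|Hne]; [lra|].
  destruct (MVT_gen f a b df) as [c [Hc Heq]].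
  - intros x Hx. rewrite Rmin_left in Hx by lra. rewrite Rmax_right in Hx by lra. apply Hd; lra.
  - intros x Hx. rewrite Rmin_left in Hx by lra. rewrite Rmax_right in Hx by lra.
    apply continuity_pt_filterlim. apply (@ex_derive_continuous R_AbsRing R_NormedModule f x). exists (df x). apply Hd; lra.
  - rewrite Rmin_left in Hc by lra. rewrite Rmax_right in Hc by lra.
    assert (0 <= df c) by (apply Hp; lra). nra.
Qed.

Lemma mono_lt (f df : R -> R) (a b : R) : a < b ->
  (forall x, a <= x <= b -> is_derive f x (df x)) ->
  (forall x, a <= x <= b -> 0 < df x) -> f a < f b.
Proof.
  intros Hab Hd Hp.
  destruct (MVT_gen f a b df) as [c [Hc Heq]].
  - intros x Hx. rewrite Rmin_left in Hx by lra. rewrite Rmax_right in Hx by lra. apply Hd; lra.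
  - intros x Hx. rewrite Rmin_left in Hx by lra. rewrite Rmax_right in Hx by lra.
    apply continuity_pt_filterlim. apply (@ex_derive_continuous R_AbsRing R_NormedModule f x). exists (df x). apply Hd; lra.
  - rewrite Rmin_left in Hc by lra. rewrite Rmax_right in Hc by lra.
    assert (0 < df c) by (apply Hp; lra). nra.
Qed.

Lemma lim_spec (y : R -> R) : is_lim y p_infty 0 ->
  forall eps, 0 < eps -> exists M, forall x, M < x -> Rabs (y x) < eps.
Proof.
  intros H eps Heps.
  assert (HP : Rbar_locally (Finite 0) (fun t => Rabs t < eps)).
  { exists (mkposreal eps Heps). intros t Ht. unfold ball in Ht; simpl in Ht.
    unfold AbsRing_ball, abs, minus, plus, opp in Ht; simpl in Ht.
    change (Rabs (t + - 0) < eps) in Ht. rewrite Ropp_0, Rplus_0_r in Ht. exact Ht. }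
  destruct (H _ HP) as [M HM]. exists M. intros x Hx. apply HM. exact Hx.
Qed.

Lemma sq0 (a : R) : a ^ 2 <= 0 -> a = 0.
Proof. intros H. destruct (Rtotal_order a 0) as [|[|]]; nra. Qed.

Section S.
Variable n : R.
Variables y dy : R -> R.
Hypothesis Hy : forall x:R, is_derive y x (dy x).
Hypothesis Hdy : forall x:R, is_derive dy x ((x ^ 2 / 4 + n) * y x).

Lemma uniqZ (p x0 : R) : y p = 0 -> dy p = 0 -> y x0 = 0.
Proof.
  intros H1 H2.
  set (K := 1 + (p^2 + x0^2)/4 + Rabs n).
  assert (HE : forall s, s = 1 \/ s = -1 -> forall t : R, is_derive (fun t => (y t ^ 2 + dy t ^ 2) * exp (s * K * t)) t
     ((2 * y t * dy t * (1 + t^2/4 + n) + s * K * (y t ^ 2 + dy t ^ 2)) * exp (s*K*t))).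
  { intros s _ t. auto_derive. exd Hy Hdy. rwd Hy Hdy. field. }
  assert (Hb : forall t, Rmin x0 p <= t <= Rmax x0 p ->
     - K * (y t ^ 2 + dy t ^ 2) <= 2 * y t * dy t * (1 + t^2/4 + n) <= K * (y t ^ 2 + dy t ^ 2)).
  { intros t Ht.
    assert (Ht2 : t^2 <= p^2 + x0^2).
    { destruct (Rle_dec x0 p).
      - rewrite Rmin_left, Rmax_right in Ht by lra.
        destruct (Rle_dec 0 t); nra.
      - rewrite Rmin_right, Rmax_left in Ht by lra.
        destruct (Rle_dec 0 t); nra. }
    assert (HA : Rabs (1 + t^2/4 + n) <= K).
    { unfold K. apply Rabs_le. pose proof (Rabs_pos n). split.
      - pose proof (Rle_abs (-n)). rewrite Rabs_Ropp in H0. nra.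
      - pose proof (Rle_abs n). nra. }
    apply Rabs_le_between in HA.
    set (A := 1 + t^2/4 + n) in *.
    pose proof (pow2_ge_0 (y t + dy t)). pose proof (pow2_ge_0 (y t - dy t)).
    split; nra. }
  assert (Ey : y x0 ^ 2 + dy x0 ^2 <= 0).
  { destruct (Rle_dec x0 p).
    - assert (Hm := mono_le (fun t => (y t ^ 2 + dy t ^ 2) * exp (1 * K * t)) _ x0 p r
        (fun t _ => HE 1 (or_introl eq_refl) t)).
      simpl in Hm. rewrite H1, H2 in Hm.
      assert (Hm' : (y x0 ^ 2 + dy x0 ^ 2) * exp (1 * K * x0) <= 0).
      { replace 0 with ((0 ^ 2 + 0 ^ 2) * exp (1 * K * p)) by ring. apply Hm.
        intros t Ht. apply Rmult_le_pos; [|apply Rlt_le, exp_pos].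
        assert (Rmin x0 p <= t <= Rmax x0 p) by (rewrite Rmin_left, Rmax_right; lra).
        specialize (Hb t H). lra. }
      pose proof (exp_pos (1*K*x0)). nra.
    - assert (Hm := mono_le (fun t => - ((y t ^ 2 + dy t ^ 2) * exp (-1 * K * t)))
         (fun t => - ((2 * y t * dy t * (1 + t^2/4 + n) + -1 * K * (y t ^ 2 + dy t ^ 2)) * exp (-1*K*t))) p x0 ltac:(lra)).
      simpl in Hm. rewrite H1, H2 in Hm.
      assert (Hm' : 0 <= - ((y x0 ^ 2 + dy x0 ^ 2) * exp (-1 * K * x0))).
      { replace 0 with (- ((0 ^ 2 + 0 ^ 2) * exp (-1 * K * p))) by ring. apply Hm.
        - intros t _. apply (is_derive_opp (fun t => (y t ^ 2 + dy t ^ 2) * exp (-1 * K * t))).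
          apply (HE (-1) (or_intror eq_refl)).
        - intros t Ht. rewrite <- Ropp_0. apply Ropp_le_contravar.
          apply Rmult_le_0_r; [|apply Rlt_le, exp_pos].
          assert (Rmin x0 p <= t <= Rmax x0 p) by (rewrite Rmin_right, Rmax_left; lra).
          specialize (Hb t H). lra. }
      pose proof (exp_pos (-1*K*x0)). nra. }
  nra.
Qed.

Definition u t := y t * (dy t + t/2 * y t).
Definition L t := dy t ^ 2 - (t^2/4 + n + 1/2) * y t ^ 2.
Definition v t := y t * (dy t - t/2 * y t).
Definition Mf t := dy t ^ 2 - (t^2/4 + n - 1/2) * y t ^ 2.

Lemma d_u (x : R) : is_derive u x ((dy x + x/2*y x)^2 + (n+1/2)*y x^2).
Proof. unfold u. dtac Hy Hdy. field. Qed.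
Lemma d_L (x : R) : is_derive L x (- u x).
Proof. unfold L, u. dtac Hy Hdy. field. Qed.
Lemma d_v (x : R) : is_derive v x ((dy x - x/2*y x)^2 + (n-1/2)*y x^2).
Proof. unfold v. dtac Hy Hdy. field. Qed.
Lemma d_M (x : R) : is_derive Mf x (v x).
Proof. unfold Mf, v. dtac Hy Hdy. field. Qed.
Lemma d_Y (x : R) : is_derive (fun t => y t ^ 2) x (2 * y x * dy x).
Proof. dtac Hy Hdy. field. Qed.
Lemma d_T (x : R) : is_derive (fun t => - (t ^ 4 * y t ^ 2)) x (- (4 * x^3 * y x ^ 2 + x^4 * (2 * y x * dy x))).
Proof. dtac Hy Hdy. field. Qed.
Lemma d_phi (x : R) : u x <> 0 -> is_derive (fun t => - / u t - t) x
   (((dy x + x/2*y x)^2 + (n+1/2)*y x^2) / (u x) ^ 2 - 1).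
Proof. intros Hu. unfold u in *. auto_derive.
  - exd Hy Hdy. exact Hu.
  - rwd Hy Hdy. field. split; intro Hc; apply Hu; [ nra | rewrite Hc; ring ].
Qed.

Hypothesis Hlim : is_lim y p_infty 0.
Hypothesis Hnz : exists x0, y x0 <> 0.

Section Left.
Hypothesis Hk : - (1/2) < n.

Lemma u_le0 (x0 : R) : u x0 <= 0.
Proof.
  destruct (Rle_lt_dec (u x0) 0) as [|Hc]; auto. exfalso.
  set (c := u x0) in *.
  destruct (lim_spec y Hlim 1 Rlt_0_1) as [M HM].
  assert (Hge : forall t, x0 <= t -> c <= u t).
  { intros t Ht. apply (mono_le u _ x0 t Ht (fun x _ => d_u x)).
    intros x _. pose proof (pow2_ge_0 (dy x + x/2*y x)). pose proof (pow2_ge_0 (y x)). nra. }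
  set (a := Rmax x0 M + 1). set (b := a + / c + 1).
  assert (Ha : x0 <= a /\ M < a) by (unfold a; pose proof (Rmax_l x0 M); pose proof (Rmax_r x0 M); lra).
  pose proof (Rinv_0_lt_compat c Hc) as Hic.
  assert (Hab : a <= b) by (unfold b; lra).
  assert (Hm := mono_le (fun t => - / u t - t) (fun x => ((dy x + x/2*y x)^2 + (n+1/2)*y x^2) / (u x) ^ 2 - 1) a b Hab).
  assert (Hm' : - / u a - a <= - / u b - b).
  { apply Hm.
    - intros x Hx. apply d_phi. specialize (Hge x ltac:(lra)). lra.
    - intros x Hx. specialize (Hge x ltac:(lra)).
      assert (Hyx : Rabs (y x) < 1) by (apply HM; lra).
      apply Rabs_def2 in Hyx.
      assert (Hux : 0 < u x ^ 2) by (apply pow_lt; lra).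
      assert (Hdom : u x ^ 2 <= (dy x + x/2*y x)^2 + (n+1/2)*y x^2).
      { unfold u. pose proof (pow2_ge_0 (dy x + x/2*y x)). pose proof (pow2_ge_0 (y x)).
        assert (y x ^ 2 <= 1) by nra.
        replace ((y x * (dy x + x / 2 * y x)) ^ 2) with (y x ^ 2 * (dy x + x / 2 * y x)^2) by ring.
        nra. }
      assert (1 <= ((dy x + x/2*y x)^2 + (n+1/2)*y x^2) / u x ^ 2).
      { apply (Rmult_le_reg_r (u x ^ 2)); auto. unfold Rdiv. rewrite Rmult_assoc, Rinv_l by lra. lra. }
      lra. }
  assert (Hua : c <= u a) by (apply Hge; lra).
  assert (Hub : c <= u b) by (apply Hge; lra).
  assert (/ u a <= / c) by (apply Rinv_le_contravar; lra).
  assert (0 < / u b) by (apply Rinv_0_lt_compat; lra).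
  assert (b - a = / c + 1) by (unfold b; ring). lra.
Qed.

Lemma up_pos (x : R) : 0 < (dy x + x/2*y x)^2 + (n+1/2)*y x^2.
Proof.
  destruct (Rlt_le_dec 0 ((dy x + x/2*y x)^2 + (n+1/2)*y x^2)) as [|H]; auto. exfalso.
  pose proof (pow2_ge_0 (dy x + x/2*y x)). pose proof (pow2_ge_0 (y x)).
  assert (Hy0 : y x = 0) by (apply sq0; nra).
  rewrite Hy0 in H. assert (Hd0 : dy x = 0) by (apply sq0; nra).
  destruct Hnz as [x0 Hx0]. apply Hx0. exact (uniqZ x x0 Hy0 Hd0).
Qed.

Lemma u_lt0 (x : R) : u x < 0.
Proof.
  assert (u x < u (x+1)).
  { apply (mono_lt u _ x (x+1) ltac:(lra) (fun t _ => d_u t)). intros t _. apply up_pos. }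
  pose proof (u_le0 (x+1)). lra.
Qed.

Lemma L_le0 (x0 : R) : L x0 <= 0.
Proof.
  destruct (Rle_lt_dec (L x0) 0) as [|Hc]; auto. exfalso.
  set (eps := L x0) in *.
  destruct (lim_spec y Hlim 1 Rlt_0_1) as [M HM].
  assert (Hge : forall t, x0 <= t -> eps <= L t).
  { intros t Ht. apply (mono_le L _ x0 t Ht (fun x _ => d_L x)).
    intros x _. pose proof (u_lt0 x). lra. }
  set (a := Rmax x0 M + 1). set (T := 2 + 2 / eps). set (b := a + T).
  assert (Ha : x0 <= a /\ M < a) by (unfold a; pose proof (Rmax_l x0 M); pose proof (Rmax_r x0 M); lra).
  assert (HT : 2 <= T) by (unfold T; assert (0 < 2/eps) by (apply Rdiv_lt_0_compat; lra); lra).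
  assert (HeT : 2 <= eps * T) by (replace (eps * T) with (2*eps + 2) by (unfold T; field; lra); lra).
  destruct (MVT_gen y a b dy) as [c [Hcc Heq]].
  - intros x _. apply Hy.
  - intros x _. apply continuity_pt_filterlim. apply (@ex_derive_continuous R_AbsRing R_NormedModule y x).
    exists (dy x). apply Hy.
  - rewrite Rmin_left in Hcc by (unfold b; lra). rewrite Rmax_right in Hcc by (unfold b; lra).
    assert (HLc : eps <= L c) by (apply Hge; lra).
    unfold L in HLc.
    assert (0 <= (c ^ 2 / 4 + n + 1 / 2) * y c ^ 2).
    { apply Rmult_le_pos; [|apply pow2_ge_0]. pose proof (pow2_ge_0 c). lra. }
    assert (Hdc : eps <= dy c ^ 2) by lra.
    assert (Hya : Rabs (y a) < 1) by (apply HM; lra).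
    assert (Hyb : Rabs (y b) < 1) by (apply HM; unfold b; lra).
    apply Rabs_def2 in Hya. apply Rabs_def2 in Hyb.
    replace (b - a) with T in Heq by (unfold b; ring).
    assert (Hsq : (y b - y a) ^ 2 = dy c ^ 2 * T ^ 2) by (rewrite Heq; ring).
    assert (4 <= dy c ^ 2 * T ^ 2) by nra.
    nra.
Qed.

Lemma L_lt0 (x : R) : L x < 0.
Proof.
  assert (L x < L (x+1)).
  { apply (mono_lt L _ x (x+1) ltac:(lra) (fun t _ => d_L t)). intros t _. pose proof (u_lt0 t). lra. }
  pose proof (L_le0 (x+1)). lra.
Qed.

Lemma y_nz (x : R) : y x <> 0.
Proof. intros H. pose proof (L_lt0 x). unfold L in H0. rewrite H in H0. pose proof (pow2_ge_0 (dy x)). nra. Qed.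

End Left.

Lemma sqrt_lt_of (a A : R) : 0 <= a -> a ^ 2 < A -> a < sqrt A.
Proof.
  intros Ha H. assert (HA : 0 <= A) by nra.
  pose proof (sqrt_sqrt A HA). pose proof (sqrt_pos A).
  destruct (Rlt_le_dec a (sqrt A)); auto. nra.
Qed.

Lemma sqrt_gt_of (a A : R) : 0 <= A -> 0 <= a -> A < a ^ 2 -> sqrt A < a.
Proof.
  intros HA Ha H.
  pose proof (sqrt_sqrt A HA). pose proof (sqrt_pos A).
  destruct (Rlt_le_dec (sqrt A) a); auto. nra.
Qed.

Lemma left_final (Hk : - (1/2) < n) (x : R) :
  y x <> 0 /\ - sqrt (x ^ 2 / 4 + n + 1 / 2) < dy x / y x.
Proof.
  pose proof (y_nz Hk x) as Hnz0. split; auto.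
  pose proof (L_lt0 Hk x) as HL. unfold L in HL.
  set (h := dy x / y x).
  assert (Hd : dy x = h * y x) by (unfold h; field; auto).
  rewrite Hd in HL.
  assert (Hy2 : 0 < y x ^ 2) by (apply pow2_gt_0; auto).
  assert (Hh2 : h ^ 2 < x ^ 2 / 4 + n + 1 / 2).
  { apply (Rmult_lt_reg_r (y x ^ 2)); auto. replace ((h * y x) ^ 2) with (h^2 * y x ^ 2) in HL by ring. lra. }
  destruct (Rle_lt_dec 0 h).
  - assert (0 < x ^ 2 / 4 + n + 1 / 2) by (pose proof (pow2_ge_0 x); lra).
    pose proof (sqrt_lt_R0 _ H). lra.
  - assert (- h < sqrt (x ^ 2 / 4 + n + 1 / 2)) by (apply sqrt_lt_of; [lra| replace ((-h)^2) with (h^2) by ring; auto]).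
    lra.
Qed.

Section Right.
Hypothesis Hn : 1/2 <= n.
Lemma Hk : - (1/2) < n. Proof. lra. Qed.

Lemma v_lt0 (x0 : R) : v x0 < 0.
Proof.
  destruct (Rlt_le_dec (v x0) 0) as [|Hc]; auto. exfalso.
  set (a := Rmax x0 0).
  assert (Ha : x0 <= a /\ 0 <= a) by (unfold a; pose proof (Rmax_l x0 0); pose proof (Rmax_r x0 0); lra).
  assert (Hge : forall t, x0 <= t -> 0 <= v t).
  { intros t Ht. apply Rle_trans with (v x0); auto.
    apply (mono_le v _ x0 t Ht (fun x _ => d_v x)).
    intros x _. pose proof (pow2_ge_0 (dy x - x/2*y x)). pose proof (pow2_ge_0 (y x)). nra. }
  pose proof (y_nz Hk a) as Hya.
  assert (He : 0 < Rabs (y a)) by (apply Rabs_pos_lt; auto).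
  destruct (lim_spec y Hlim _ He) as [M HM].
  set (b := Rmax a M + 1).
  assert (Hb : a <= b /\ M < b) by (unfold b; pose proof (Rmax_l a M); pose proof (Rmax_r a M); lra).
  assert (HY : y a ^ 2 <= y b ^ 2).
  { apply (mono_le (fun t => y t ^ 2) _ a b ltac:(lra) (fun x _ => d_Y x)).
    intros x Hx. specialize (Hge x ltac:(lra)). unfold v in Hge.
    pose proof (pow2_ge_0 (y x)). nra. }
  specialize (HM b ltac:(lra)).
  rewrite <- (pow2_abs (y a)), <- (pow2_abs (y b)) in HY.
  pose proof (Rabs_pos (y b)). nra.
Qed.

Lemma T_bound (t : R) : 2 <= t -> t ^ 4 * y t ^ 2 <= 2 ^ 4 * y 2 ^ 2.
Proof.
  intros Ht.
  assert (H := mono_le (fun t => - (t ^ 4 * y t ^ 2)) _ 2 t Ht (fun x _ => d_T x)).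
  cut (- (2 ^ 4 * y 2 ^ 2) <= - (t ^ 4 * y t ^ 2)); [lra|]. apply H.
  intros x Hx. pose proof (u_lt0 Hk x) as Hu. unfold u in Hu.
  assert (E : 2 * y x * dy x = 2 * (y x * (dy x + x / 2 * y x)) - x * y x ^ 2) by field.
  rewrite E.
  assert (0 <= x ^ 3) by (apply pow_le; lra).
  assert (0 <= x ^ 4) by (apply pow_le; lra).
  pose proof (pow2_ge_0 (y x)).
  assert (0 <= x^3 * y x ^ 2 * (x^2 - 4)) by (apply Rmult_le_pos; [apply Rmult_le_pos; auto| nra]).
  assert (x^4 * (y x * (dy x + x / 2 * y x)) <= 0) by nra.
  replace (- (4 * x ^ 3 * y x ^ 2 + x ^ 4 * (2 * (y x * (dy x + x / 2 * y x)) - x * y x ^ 2)))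
    with (x^3 * y x ^ 2 * (x^2 - 4) - 2 * (x^4 * (y x * (dy x + x / 2 * y x)))) by ring.
  lra.
Qed.

Lemma M_pos (x : R) : 0 < Mf x.
Proof.
  destruct (Rlt_le_dec 0 (Mf x)) as [|Hc]; auto. exfalso.
  assert (Hdec : forall a b, a < b -> Mf b < Mf a).
  { intros a0 b0 Hab. cut (- Mf a0 < - Mf b0); [lra|].
    apply (mono_lt (fun t => - Mf t) (fun t => - v t) a0 b0 Hab).
    - intros t _. apply (is_derive_opp Mf). apply d_M.
    - intros t _. pose proof (v_lt0 t). lra. }
  assert (Hdecw : forall a b, a <= b -> Mf b <= Mf a).
  { intros a0 b0 Hab. destruct (Req_dec a0 b0) as [->|]; [lra|]. apply Rlt_le, Hdec; lra. }
  set (delta := - Mf (x+1)).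
  assert (Hd : 0 < delta) by (unfold delta; pose proof (Hdec x (x+1) ltac:(lra)); lra).
  set (C := 2 ^ 4 * y 2 ^ 2).
  assert (HC : 0 <= C) by (unfold C; pose proof (pow2_ge_0 (y 2)); lra).
  set (t := Rabs x + 2 + 2 * Rabs n + C / delta).
  assert (HCd : 0 <= C / delta) by (apply Rdiv_le_0_compat; lra).
  pose proof (Rle_abs x). pose proof (Rle_abs n). pose proof (Rabs_pos n).
  assert (Ht2 : 2 <= t) by (unfold t; pose proof (Rabs_pos x); lra).
  assert (Htx : x + 1 <= t) by (unfold t; lra).
  assert (HMt0 : Mf t <= Mf (x+1)) by (apply Hdecw; lra).
  assert (HMt : Mf t <= - delta) by (unfold delta; lra).
  unfold Mf in HMt.
  pose proof (pow2_ge_0 (dy t)).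
  set (Y := y t ^ 2) in *.
  assert (HY0 : 0 <= Y) by (unfold Y; apply pow2_ge_0).
  assert (G1 : delta <= (t ^ 2 / 4 + n - 1 / 2) * Y) by lra.
  assert (Htt : 0 <= t * (t - 2)) by (apply Rmult_le_pos; lra).
  assert (Hn2 : 2 * Rabs n <= t) by (unfold t; pose proof (Rabs_pos x); lra).
  assert (Hnt : n - 1/2 <= t^2/4) by (simpl; lra).
  assert (G2 : delta <= t^2/2 * Y).
  { assert ((t ^ 2 / 4 + n - 1 / 2) * Y <= t^2/2 * Y) by (apply Rmult_le_compat_r; lra). lra. }
  assert (HT : t ^ 4 * Y <= C) by (apply T_bound; lra).
  assert (G3 : delta * t ^ 2 <= C / 2).
  { assert (0 <= t^2) by apply pow2_ge_0.
    assert (K3 : delta * t^2 <= t^2/2 * Y * t^2) by (apply Rmult_le_compat_r; lra).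
    replace (t^2/2*Y*t^2) with (t^4 * Y / 2) in K3 by field. lra. }
  assert (G4 : C <= delta * t).
  { assert (C / delta * delta = C) by (field; lra).
    assert (C / delta <= t) by (unfold t; pose proof (Rabs_pos x); lra).
    assert (C / delta * delta <= t * delta) by (apply Rmult_le_compat_r; lra). lra. }
  assert (K6 : C * t <= delta * t * t) by (apply Rmult_le_compat_r; lra).
  assert (2 * C <= C * t) by nra.
  assert (4 * delta <= delta * t^2) by nra.
  replace (delta * t * t) with (delta * t^2) in K6 by ring.
  lra.
Qed.

Lemma right_final (x : R) :
  dy x / y x < - sqrt (x ^ 2 / 4 + n - 1 / 2).
Proof.
  pose proof (y_nz Hk x) as Hnz0.
  pose proof (M_pos x) as HM. unfold Mf in HM.
  pose proof (u_lt0 Hk x) as Hu. pose proof (v_lt0 x) as Hv. unfold u in Hu. unfold v in Hv.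
  set (h := dy x / y x).
  assert (Hd : dy x = h * y x) by (unfold h; field; auto).
  rewrite Hd in HM, Hu, Hv.
  assert (Hy2 : 0 < y x ^ 2) by (apply pow2_gt_0; auto).
  assert (Hh2 : x ^ 2 / 4 + n - 1 / 2 < h ^ 2).
  { apply (Rmult_lt_reg_r (y x ^ 2)); auto. replace ((h * y x) ^ 2) with (h^2 * y x ^ 2) in HM by ring. lra. }
  assert (Hneg : h < 0).
  { replace (y x * (h * y x + x / 2 * y x)) with (y x ^ 2 * (h + x/2)) in Hu by ring.
    replace (y x * (h * y x - x / 2 * y x)) with (y x ^ 2 * (h - x/2)) in Hv by ring.
    assert (h + x/2 < 0) by nra. assert (h - x/2 < 0) by nra. lra. }
  assert (sqrt (x ^ 2 / 4 + n - 1 / 2) < - h).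
  { apply sqrt_gt_of; [pose proof (pow2_ge_0 x); lra | lra | replace ((-h)^2) with (h^2) by ring; auto]. }
  lra.
Qed.

End Right.
End S.

Theorem theorem12 :
  forall (n : R) (y dy : R -> R),
    is_PCF_U n y dy ->
    (1 / 2 <= n ->
       forall x : R, y x <> 0 /\
         - sqrt (x ^ 2 / 4 + n + 1 / 2) < dy x / y x /\
         dy x / y x < - sqrt (x ^ 2 / 4 + n - 1 / 2)) /\
    (- (1 / 2) < n ->
       forall x : R, y x <> 0 /\
         - sqrt (x ^ 2 / 4 + n + 1 / 2) < dy x / y x).
Proof.
  intros n y dy [Hy [Hdy [Hlim Hnz]]]. split.
  - intros Hn x.
    destruct (left_final n y dy Hy Hdy Hlim Hnz ltac:(lra) x) as [A B].
    split; [exact A|split; [exact B|]].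
    exact (right_final n y dy Hy Hdy Hlim Hnz Hn x).
  - intros Hk x. exact (left_final n y dy Hy Hdy Hlim Hnz Hk x).
Qed.
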